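(* Let $\lambda=(n,n)$ with $n\ge1$. Then $$\xi(q)=\sum_k|S_k(\lambda)|q^k=\sum_{i=1}^{n}B(n-1,n-i)(1+q)^i=\sum_{i=1}^n\frac{i}{n}\binom{2n-i-1}{n-i}(1+q)^i,$$ where $B(\alpha,\beta)=\frac{\alpha-\beta+1}{\alpha+1}\binom{\alpha+\beta}{\alpha}$ is the ballot number.
   Context: The shape $(n,n)$ has two rows of $n$ left-justified boxes. A row-standard filling uses $1,\dots,2n$ once each with rows strictly increasing left to right. Inversion pairs of a row-standard $\tau$: for a box $c$ and $r\ge1$ let $c^{(r)}$ be the box $r$ positions to its right, if it exists. For distinct boxes $c,c'$ in the same column with $\tau(c)<\tau(c')$, let $r\ge1$ be least such that one of $c^{(r)},c'^{(r)}$ does not exist or $\tau(c^{(r)})\ne\tau(c'^{(r)})$; $(c,c')$ is an inversion pair if either (one does not exist and $c$ lies below $c'$) or (both exist and $\tau(c^{(r)})>\tau(c'^{(r)})$). $S_k(\lambda)$: row-standard fillings of shape $\lambda$ with exactly $k$ inversion pairs. *)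

(* Defs.v *)
From HB Require Import structures.
From mathcomp Require Import all_boot all_order all_algebra.
Set Implicit Arguments. Unset Strict Implicit. Unset Printing Implicit Defensive.
Import GRing.Theory Num.Theory.

(* Boxes of the shape (n,n): (row, column); row 0 is the top row, row 1 the
   bottom row (English convention); columns 0..n-1 left to right. *)
Definition box (n : nat) := ('I_2 * 'I_n)%type.

(* A filling of (n,n) with the numbers 1..2n: the value at box c is
   (t c).+1 where t c : 'I_(2n). *)
Definition filling (n : nat) := {ffun box n -> 'I_(2 * n)}.

Definition entry n (t : filling n) (c : box n) : nat := (t c).+1.

Definition row_standard n (t : filling n) : bool :=
  injectiveb (fun c : box n => t c) &&
  [forall c : box n, forall c' : box n,
     (c.1 == c'.1) && (c.2 < c'.2)%N ==> (entry t c < entry t c')%N].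

Definition right n (c : box n) (r : nat) : option (box n) :=
  match @insub nat (fun k => k < n)%N 'I_n (c.2 + r)%N with
  | Some j => Some (c.1, j)
  | None => None
  end.

Definition stop_at n (t : filling n) (c c' : box n) (r : nat) : bool :=
  match right c r, right c' r with
  | Some d, Some d' => entry t d != entry t d'
  | _, _ => true
  end.

(* least r >= 1 with stop_at (such r <= n always exists since c^(n) does not
   exist). *)
Definition least_r n (t : filling n) (c c' : box n) : nat :=
  (find (stop_at t c c') (iota 1 n)).+1.

Definition inv_pair n (t : filling n) (c c' : box n) : bool :=
  [&& c != c', c.2 == c'.2, (entry t c < entry t c')%N &
   match right c (least_r t c c'), right c' (least_r t c c') with
   | Some d, Some d' => (entry t d > entry t d')%N
   | _, _ => (c'.1 < c.1)%N  (* c lies below c' *)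
   end].

Definition inv n (t : filling n) : nat :=
  #|[set p : box n * box n | inv_pair t p.1 p.2]|.

Definition S (n k : nat) : {set filling n} :=
  [set t : filling n | row_standard t && (inv t == k)].

Definition ballot (a b : nat) : rat :=
  ((a%:Z - b%:Z + 1)%:~R / (a.+1)%:R) * ('C(a + b, a))%:R.

(* Main.v *)
Require Import Defs.
From HB Require Import structures.
From mathcomp Require Import all_boot all_order all_algebra.
From mathcomp Require Import zify ring lra.
Import GRing.Theory Num.Theory.
Import Defs.

Definition nf (w : seq bool) : nat := count (fun x => ~~ x) w.
Definition nt (w : seq bool) : nat := count id w.
Lemma nf_cons x w : nf (x :: w) = (~~ x) + nf w. Proof. by []. Qed.
Lemma nt_cons x w : nt (x :: w) = x + nt w. Proof. by []. Qed.

Fixpoint sc (w : seq bool) : bool * nat :=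
  match w with
  | [::] => (false, 0)
  | x :: w' => if nt w' == nf w'
               then (~~ x, (sc w').2 + (~~ x != (sc w').1))
               else sc w'
  end.

Fixpoint Wd (a : nat) : nat -> seq (seq bool) :=
  fix Wb b :=
    (match a with 0 => if b is 0 then [:: [::]] else [::]
                | a'.+1 => map (cons false) (Wd a' b) end) ++
    (match b with 0 => [::] | b'.+1 => map (cons true) (Wb b') end).

Lemma Wd_eq a b : Wd a b =
  (if a is a'.+1 then map (cons false) (Wd a' b) else if b is 0 then [:: [::]] else [::]) ++
  (if b is b'.+1 then map (cons true) (Wd a b') else [::]).
Proof. by case: a; case: b. Qed.

Lemma mem_map_cons (x y : bool) w L : (y :: w \in map (cons x) L) = (y == x) && (w \in L).
Proof.
apply/mapP/andP => [[w' Hw' [-> ->]] // | [/eqP -> Hw]]; by exists w.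
Qed.

Lemma nil_map_cons (x : bool) L : ([::] \in map (cons x) L) = false.
Proof. by apply/mapP => -[]. Qed.

Lemma mem_Wd a b w : (w \in Wd a b) = (nf w == a) && (nt w == b).
Proof.
elim: w a b => [|x w IH] a b.
  rewrite Wd_eq; case: a => [|a]; case: b => [|b] //=; rewrite ?mem_cat ?nil_map_cons //.
rewrite Wd_eq mem_cat.
case: a => [|a]; case: b => [|b]; rewrite ?mem_map_cons ?IH ?in_nil ?orbF ?orFb //=;
  case: x => /=; rewrite ?add0n ?add1n ?eqSS //= ?andbF ?orbF //.
Qed.

Lemma cons_inj (x : bool) : injective (cons x).
Proof. by move=> ? ? []. Qed.

Lemma uniq_Wd a b : uniq (Wd a b).
Proof.
elim: a b => [|a IHa] b; elim: b => [|b IHb].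
- by [].
- by rewrite Wd_eq cat0s (map_inj_uniq (cons_inj _)).
- by rewrite Wd_eq cats0 (map_inj_uniq (cons_inj _)).
- rewrite Wd_eq cat_uniq !(map_inj_uniq (cons_inj _)) IHa IHb andbT /=.
  by apply/hasP => -[w /mapP[w1 _ ->]] /mapP[w2 _] [].
Qed.

Lemma sc_side w : ((nf w < nt w)%N -> (sc w).1 = false) /\
                  ((nt w < nf w)%N -> (sc w).1 = true).
Proof.
elim: w => [|x w [IH1 IH2]] //=.
case: ifP => [/eqP E|/eqP NE]; case: x; rewrite /= ?nf_cons ?nt_cons /=; split => // H.
all: try (by exfalso; lia).
- by rewrite IH1 //; lia.
- by rewrite IH2 //; lia.
- by rewrite IH1 //; lia.
- by rewrite IH2 //; lia.
Qed.

Fixpoint bal (a : nat) : nat -> nat :=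
  fix balb b := match b with
  | 0 => 1%N
  | b'.+1 => if (a < b'.+1)%N then 0%N
             else ((match a with 0 => 0%N | a'.+1 => bal a' b'.+1 end) + balb b')%N
  end.

Lemma bal0 a : bal a 0 = 1%N. Proof. by case: a. Qed.
Lemma balS a b : bal a b.+1 = if (a < b.+1)%N then 0%N else (bal a.-1 b.+1 + bal a b)%N.
Proof. by case: a. Qed.
Lemma bal_gt a b : (a < b)%N -> bal a b = 0%N.
Proof. by case: b => // b H; rewrite balS H. Qed.

Local Open Scope ring_scope.

Fixpoint AB (j : nat) : {poly rat} * {poly rat} :=
  match j with 0 => (1, 0) | j'.+1 => ((AB j').1 + 'X * (AB j').2, 'X * (AB j').1 + (AB j').2) end.
Definition Ap j := (AB j).1.
Definition Bp j := (AB j).2.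
Arguments Ap : simpl never.
Arguments Bp : simpl never.
Lemma ApS j : Ap j.+1 = Ap j + 'X * Bp j. Proof. by []. Qed.
Lemma BpS j : Bp j.+1 = 'X * Ap j + Bp j. Proof. by []. Qed.
Lemma ApBp j : Ap j + Bp j = (1 + 'X) ^+ j.
Proof. elim: j => [|j IH]; first by rewrite /Ap /Bp /= addr0 expr0.
rewrite ApS BpS exprS -IH; ring. Qed.

Definition Tot a b := \sum_(w <- Wd a b) 'X^((sc w).2) : {poly rat}.
Definition Tot0 n := \sum_(w <- Wd n n | ~~ (sc w).1) 'X^((sc w).2) : {poly rat}.
Definition Tot1 n := \sum_(w <- Wd n n | (sc w).1) 'X^((sc w).2) : {poly rat}.

Definition Rg a b := \sum_(be < b.+1) Bp (b - be).+1 *+ bal a.-1 be.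
Definition Rl a b := \sum_(be < a.+1) Ap (a - be).+1 *+ bal b.-1 be.
Definition R0 n := \sum_(be < n.+1) Ap (n - be) *+ bal n.-1 be.
Definition R1 n := \sum_(be < n.+1) Bp (n - be) *+ bal n.-1 be.

Definition Claim a b := [/\ (b < a)%N -> Tot a b = Rg a b,
                           (a < b)%N -> Tot a b = Rl a b &
                           a = b -> Tot0 a = R0 a /\ Tot1 a = R1 a].

Lemma sum_false a b (F : seq bool -> {poly rat}) :
  \sum_(w <- map (cons false) (Wd a b)) F w = \sum_(w <- Wd a b) F (false :: w).
Proof. by rewrite big_map. Qed.

Lemma sum_Wd_eq a b (F G : seq bool -> {poly rat}) :
  (forall w, (nf w = a)%N -> (nt w = b)%N -> F w = G w) ->
  \sum_(w <- Wd a b) F w = \sum_(w <- Wd a b) G w.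
Proof.
move=> H; rewrite big_seq_cond [RHS]big_seq_cond; apply: eq_bigr => w.
by rewrite mem_Wd andbT => /andP[/eqP ? /eqP ?]; apply: H.
Qed.

Lemma sc_false w : sc (false :: w) =
  if nt w == nf w then (true, (sc w).2 + (true != (sc w).1))%N else sc w.
Proof. by []. Qed.
Lemma sc_true w : sc (true :: w) =
  if nt w == nf w then (false, (sc w).2 + (false != (sc w).1))%N else sc w.
Proof. by []. Qed.

Lemma sum_recl (F : nat -> {poly rat}) k :
  \sum_(be < k.+1) F be = F 0%N + \sum_(i < k) F i.+1.
Proof. by rewrite big_ord_recl. Qed.

Lemma Rg_split a' b' : (b'.+1 <= a')%N ->
  Rg a'.+1 b'.+1 = \sum_(be < b'.+2) Bp (b'.+1 - be).+1 *+ bal a'.-1 be + Rg a'.+1 b'.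
Proof.
move=> H; rewrite /Rg (sum_recl (fun be => Bp (b'.+1 - be).+1 *+ bal a' be)).
rewrite (sum_recl (fun be => Bp (b'.+1 - be).+1 *+ bal a'.-1 be)) !bal0 -[RHS]addrA.
congr (_ + _); rewrite -big_split; apply: eq_bigr => i _.
rewrite balS ifF; last by have := ltn_ord i; lia.
by rewrite mulrnDr subSS.
Qed.

Lemma Rl_split a' b' : (a'.+1 <= b')%N ->
  Rl a'.+1 b'.+1 = \sum_(be < a'.+2) Ap (a'.+1 - be).+1 *+ bal b'.-1 be + Rl a' b'.+1.
Proof.
move=> H; rewrite /Rl (sum_recl (fun be => Ap (a'.+1 - be).+1 *+ bal b' be)).
rewrite (sum_recl (fun be => Ap (a'.+1 - be).+1 *+ bal b'.-1 be)) !bal0 -[RHS]addrA.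
congr (_ + _); rewrite -big_split; apply: eq_bigr => i _.
rewrite balS ifF; last by have := ltn_ord i; lia.
by rewrite mulrnDr subSS.
Qed.

Lemma XR0R1 b : 'X * R0 b + R1 b = \sum_(be < b.+1) Bp (b - be).+1 *+ bal b.-1 be.
Proof.
rewrite /R0 /R1 mulr_sumr -big_split /=; apply: eq_bigr => i _.
by rewrite BpS mulrnDl mulrnAr.
Qed.

Lemma R0XR1 b : R0 b + 'X * R1 b = \sum_(be < b.+1) Ap (b - be).+1 *+ bal b.-1 be.
Proof.
rewrite /R0 /R1 mulr_sumr -big_split /=; apply: eq_bigr => i _.
by rewrite ApS mulrnDl mulrnAr.
Qed.

Lemma sum_recr (F : nat -> {poly rat}) k :
  \sum_(be < k.+1) F be = \sum_(i < k) F i + F k.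
Proof. by rewrite big_ord_recr. Qed.

Lemma sum_cat (L1 L2 : seq (seq bool)) (F : seq bool -> {poly rat}) :
  \sum_(w <- L1 ++ L2) F w = \sum_(w <- L1) F w + \sum_(w <- L2) F w.
Proof. exact: big_cat. Qed.
Lemma sum_cat_cond (L1 L2 : seq (seq bool)) (P : pred (seq bool)) (F : seq bool -> {poly rat}) :
  \sum_(w <- L1 ++ L2 | P w) F w = \sum_(w <- L1 | P w) F w + \sum_(w <- L2 | P w) F w.
Proof. exact: big_cat. Qed.

Section Ind.
Variables a b : nat.
Hypothesis IH : forall a' b', (a' + b' < a + b)%N -> Claim a' b'.

Lemma partG : (b < a)%N -> Tot a b = Rg a b.
Proof.
case: a IH => [|a'] // IH' Hba.
have FP : \sum_(w <- Wd a' b) 'X^((sc (false :: w)).2) =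
          \sum_(be < b.+1) Bp (b - be).+1 *+ bal a'.-1 be.
  have [Eab|Nab] := eqVneq a' b.
  - subst a'.
    rewrite (@sum_Wd_eq _ _ _ (fun w => 'X^((sc w).2 + (true != (sc w).1))%N)); last first.
      by move=> w Hf Ht; rewrite sc_false Hf Ht eqxx.
    rewrite (bigID (fun w => (sc w).1)) /=.
    have [_ _ /(_ erefl) [H0 H1]] := IH' b b (ltnSn _).
    rewrite -XR0R1 -H0 -H1 addrC mulr_sumr; congr (_ + _); apply: eq_bigr => w Hw.
      by rewrite (negbTE Hw) addn1 exprS.
    by rewrite Hw addn0.
  - rewrite (@sum_Wd_eq _ _ _ (fun w => 'X^((sc w).2))); last first.
      by move=> w Hf Ht; rewrite sc_false Hf Ht eq_sym (negbTE Nab).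
    rewrite -/(Tot a' b).
    have [+ _ _] := IH' a' b (ltnSn _) => ->; first by [].
    by rewrite ltn_neqAle eq_sym Nab -ltnS.
rewrite /Tot Wd_eq sum_cat big_map FP.
case: b IH' Hba FP => [|b'] IH' Hba FP.
  by rewrite big_nil addr0 /Rg !big_ord1 !bal0.
rewrite big_map (@Rg_split a' b' Hba).
congr (_ + _).
rewrite (@sum_Wd_eq _ _ _ (fun w => 'X^((sc w).2))); last first.
  by move=> w Hf Ht; rewrite sc_true Hf Ht ifF //; apply/eqP; lia.
rewrite -/(Tot a'.+1 b').
by have [+ _ _] := IH' a'.+1 b' ltac:(by rewrite addnS) => ->; last by lia.
Qed.

Lemma partL : (a < b)%N -> Tot a b = Rl a b.
Proof.
case: b IH => [|b'] // IH' Hab.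
have TP : \sum_(w <- Wd a b') 'X^((sc (true :: w)).2) =
          \sum_(be < a.+1) Ap (a - be).+1 *+ bal b'.-1 be.
  have [Eab|Nab] := eqVneq a b'.
  - subst b'.
    rewrite (@sum_Wd_eq _ _ _ (fun w => 'X^((sc w).2 + (false != (sc w).1))%N)); last first.
      by move=> w Hf Ht; rewrite sc_true Hf Ht eqxx.
    rewrite (bigID (fun w => (sc w).1)) /=.
    have [_ _ /(_ erefl) [H0 H1]] := IH' a a ltac:(by rewrite addnS).
    rewrite -R0XR1 -H0 -H1 mulr_sumr [RHS]addrC /Tot0; congr (_ + _); apply: eq_bigr => w Hw.
      by rewrite Hw addn1 exprS.
    by rewrite (negbTE Hw) addn0.
  - rewrite (@sum_Wd_eq _ _ _ (fun w => 'X^((sc w).2))); last first.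
      by move=> w Hf Ht; rewrite sc_true Hf Ht eq_sym (negbTE Nab).
    rewrite -/(Tot a b').
    have [_ + _] := IH' a b' ltac:(by rewrite addnS) => ->; first by [].
    by rewrite ltn_neqAle Nab -ltnS.
rewrite /Tot Wd_eq sum_cat big_map TP.
case: a IH' Hab TP => [|a'] IH' Hab TP.
  by rewrite big_nil add0r /Rl !big_ord1 !bal0.
rewrite big_map (@Rl_split a' b' Hab) addrC.
congr (_ + _).
rewrite (@sum_Wd_eq _ _ _ (fun w => 'X^((sc w).2))); last first.
  by move=> w Hf Ht; rewrite sc_false Hf Ht ifF //; apply/eqP; lia.
rewrite -/(Tot a' b'.+1).
by have [_ + _] := IH' a' b'.+1 (ltnSn _) => ->; last by lia.
Qed.

Lemma partE : a = b -> Tot0 a = R0 a /\ Tot1 a = R1 a.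
Proof.
move=> Eab; subst b.
case: a IH => [|n] IH'.
  rewrite /Tot0 /Tot1 /R0 /R1 (_ : Wd 0 0 = [:: [::]]) // !big_cons !big_nil !big_ord1 /=.
  by rewrite /Ap /Bp /= addr0.
have [+ _ _] := IH' n.+1 n ltac:(lia) => /(_ (ltnSn _)) Hg.
have [_ + _] := IH' n n.+1 ltac:(lia) => /(_ (ltnSn _)) Hl.
rewrite /Tot0 /Tot1 Wd_eq !sum_cat_cond !big_map !(big_mkcond (fun w => ~~ _)) !(big_mkcond (fun w => (sc _).1)).
rewrite (@sum_Wd_eq n n.+1 _ (fun w => 'X^((sc w).2))); last first.
  move=> w Hf Ht; rewrite sc_false Hf Ht (gtn_eqF (ltnSn n)).
  by have -> : (sc w).1 = false by apply: (proj1 (sc_side w)); rewrite Hf Ht.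
rewrite (@sum_Wd_eq n.+1 n _ (fun w => 0)); last first.
  move=> w Hf Ht; rewrite sc_true Hf Ht (ltn_eqF (ltnSn n)).
  by have -> : (sc w).1 = true by apply: (proj2 (sc_side w)); rewrite Hf Ht.
rewrite (@sum_Wd_eq n n.+1 (fun w => if (sc (false :: w)).1 then _ else _) (fun w => 0)); last first.
  move=> w Hf Ht; rewrite sc_false Hf Ht (gtn_eqF (ltnSn n)).
  by have -> : (sc w).1 = false by apply: (proj1 (sc_side w)); rewrite Hf Ht.
rewrite (@sum_Wd_eq n.+1 n (fun w => if (sc (true :: w)).1 then _ else _) (fun w => 'X^((sc w).2))); last first.
  move=> w Hf Ht; rewrite sc_true Hf Ht (ltn_eqF (ltnSn n)).
  by have -> : (sc w).1 = true by apply: (proj2 (sc_side w)); rewrite Hf Ht.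
rewrite !big1_eq addr0 add0r -/(Tot n n.+1) -/(Tot n.+1 n) Hg Hl /R0 /R1 /Rg /Rl.
rewrite (sum_recr (fun be => Ap (n.+1 - be) *+ bal n be)).
rewrite (sum_recr (fun be => Bp (n.+1 - be) *+ bal n be)) bal_gt // !mulr0n !addr0.
by split; apply: eq_bigr => i _; rewrite subSn // -ltnS.
Qed.
End Ind.

Lemma claim_all a b : Claim a b.
Proof.
have H : forall s a b, (a + b <= s)%N -> Claim a b.
  elim=> [|s IHs] a' b' Hs.
    have IH0 : forall a'' b'', (a'' + b'' < a' + b')%N -> Claim a'' b''.
      by move=> ? ?; rewrite leqn0 in Hs; rewrite (eqP Hs).
    by split; [apply: partG | apply: partL | apply: partE].
  have IH0 : forall a'' b'', (a'' + b'' < a' + b')%N -> Claim a'' b''.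
    by move=> a'' b'' Hl; apply: IHs; rewrite -ltnS; apply: leq_trans Hs.
  by split; [apply: partG | apply: partL | apply: partE].
exact: H (leqnn _).
Qed.

Lemma Tot_bal n : \sum_(w <- Wd n n) 'X^((sc w).2) = (
  \sum_(be < n.+1) (1 + 'X) ^+ (n - be) *+ bal n.-1 be : {poly rat}).
Proof.
have [_ _ /(_ erefl) [H0 H1]] := claim_all n n.
rewrite (bigID (fun w => (sc w).1)) /= addrC.
rewrite -/(Tot0 n) -/(Tot1 n) H0 H1 /R0 /R1 -big_split /=.
by apply: eq_bigr => i _; rewrite -mulrnDl ApBp.
Qed.

Close Scope ring_scope.

Local Open Scope ring_scope.
Lemma ballotE a b : ballot a b = (a%:R - b%:R + 1) / (a.+1)%:R * ('C(a + b, a))%:R.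
Proof. by rewrite /ballot intrD intrB. Qed.

Lemma ballot_step a' b' : ballot a'.+1 b'.+1 = ballot a' b'.+1 + ballot a'.+1 b'.
Proof.
rewrite !ballotE !addSn !addnS (binS (a' + b').+1 a').
have H := mul_bin_left (a' + b').+1 a'.
have E : ((a' + b').+1 - a')%N = b'.+1 by lia.
rewrite E in H.
have Hr : (a'.+1)%:R * ('C((a' + b').+1, a'.+1))%:R = (b'.+1)%:R * ('C((a' + b').+1, a'))%:R :> rat.
  by rewrite -!natrM H.
rewrite natrD.
move: Hr.
set x := ('C((a' + b').+1, a'))%:R : rat.
set y := ('C((a' + b').+1, a'.+1))%:R : rat.
move=> Hr.
have -> : y = (b'.+1)%:R * x / (a'.+1)%:R.
  by rewrite -Hr mulrC mulKf // pnatr_eq0.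
rewrite -[(a'.+2)%:R]natr1 -[(a'.+1)%:R]natr1 -[(b'.+1)%:R]natr1.
by field; rewrite !natr1 !pnatr_eq0.
Qed.

Lemma bal_ballot a b : (b <= a.+1)%N -> (bal a b)%:R = ballot a b.
Proof.
have H : forall s a b, (a + b <= s)%N -> (b <= a.+1)%N -> (bal a b)%:R = ballot a b.
  elim=> [|s IHs] a' b' Hs Hb.
    move: Hs; rewrite leqn0 addn_eq0 => /andP[/eqP -> /eqP ->].
    by rewrite ballotE /= mulr1 subr0 add0r divr1.
  case: b' Hs Hb => [|b'] Hs Hb.
    by rewrite bal0 ballotE addn0 binn subr0 natr1 divff ?mulr1 // pnatr_eq0.
  rewrite balS; case: ifP => Hab.
    have -> : b' = a' by lia.
    rewrite ballotE.
    have -> : (a'%:R - a'.+1%:R + 1 : rat) = 0 by rewrite -natr1; ring.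
    by rewrite !mul0r.
  case: a' Hs Hb Hab => [|a'] Hs Hb Hab; first by [].
  rewrite natrD ballot_step (IHs a' b'.+1) ?(IHs a'.+1 b') //; lia.
move=> Hb; exact: H (leqnn _) Hb.
Qed.

Close Scope ring_scope.

Fixpoint pos (b : bool) (w : seq bool) : seq nat :=
  match w with
  | [::] => [::]
  | x :: w' => (if x == b then [:: 0] else [::]) ++ map succn (pos b w')
  end.

Lemma size_pos_f w : size (pos false w) = nf w.
Proof. by elim: w => [|x w IH] //=; case: x; rewrite /= size_map IH. Qed.
Lemma size_pos_t w : size (pos true w) = nt w.
Proof. by elim: w => [|x w IH] //=; case: x; rewrite /= size_map IH. Qed.

Lemma mem_pos b w v : (v \in pos b w) = (v < size w) && (nth false w v == b).
Proof.
elim: w v => [|x w IH] v //=.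
rewrite mem_cat; case: v => [|v] /=.
  case: (x == b); rewrite ?inE //=; apply/mapP => -[] //.
rewrite (mem_map succn_inj) IH ltnS.
by case: (x == b).
Qed.

Lemma sorted_pos b w : sorted ltn (pos b w).
Proof.
elim: w => [|x w IH] //=.
have Hm : sorted ltn (map succn (pos b w)) by rewrite sorted_map.
case: (x == b) => //=.
case: (pos b w) Hm => //= y s Hs; exact: Hs.
Qed.

Fixpoint cs (l : seq (nat * nat)) : bool * nat :=
  match l with
  | [::] => (false, 0)
  | pq :: l' => ((pq.2 < pq.1), (cs l').2 + ((pq.2 < pq.1) != (cs l').1))
  end.

Lemma cs_shift P Q : cs (zip (map succn P) (map succn Q)) = cs (zip P Q).
Proof. by elim: P Q => [|p P IH] [|q Q] //=; rewrite IH ltnS. Qed.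

Fixpoint ca (w : seq bool) : bool * nat :=
  match w with
  | [::] => (false, 0)
  | x :: w' => if (if x then nt w' < nf w' else nf w' < nt w')
               then (x, (ca w').2 + (x != (ca w').1)) else ca w'
  end.

Lemma B2 w : cs (zip (drop (nf w - minn (nf w) (nt w)) (pos false w))
                     (drop (nt w - minn (nf w) (nt w)) (pos true w))) = ca w.
Proof.
elim: w => [|x w IH] //.
rewrite [ca _]/= !nf_cons !nt_cons.
case: x; rewrite /= ?add0n ?add1n.
- case: (ltnP (nt w) (nf w)) => Hab.
  + have -> : minn (nf w) (nt w).+1 = (nt w).+1 by lia.
    have E : minn (nf w) (nt w) = nt w by lia.
    rewrite E subnn drop0 in IH; rewrite subnn drop0.
    have Hk : (nf w - (nt w).+1 < size (pos false w))%N by rewrite size_pos_f; lia.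
    rewrite -map_drop (drop_nth 0 Hk) /=.
    have -> : (nf w - (nt w).+1).+1 = (nf w - nt w)%N by lia.
    by rewrite cs_shift IH.
  + have -> : minn (nf w) (nt w).+1 = nf w by lia.
    have E : minn (nf w) (nt w) = nf w by lia.
    rewrite E subnn drop0 in IH; rewrite subnn drop0.
    have -> : ((nt w).+1 - nf w)%N = (nt w - nf w).+1 by lia.
    by rewrite /= -map_drop cs_shift IH.
- case: (ltnP (nf w) (nt w)) => Hab.
  + have -> : minn (nf w).+1 (nt w) = (nf w).+1 by lia.
    have E : minn (nf w) (nt w) = nf w by lia.
    rewrite E subnn drop0 in IH; rewrite subnn drop0.
    have Hk : (nt w - (nf w).+1 < size (pos true w))%N by rewrite size_pos_t; lia.
    rewrite -map_drop (drop_nth 0 Hk) /=.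
    have -> : (nt w - (nf w).+1).+1 = (nt w - nf w)%N by lia.
    by rewrite cs_shift IH.
  + have -> : minn (nf w).+1 (nt w) = nt w by lia.
    have E : minn (nf w) (nt w) = nt w by lia.
    rewrite E subnn drop0 in IH; rewrite subnn drop0.
    have -> : ((nf w).+1 - nt w)%N = (nf w - nt w).+1 by lia.
    by rewrite /= -map_drop cs_shift IH.
Qed.

Lemma B3 w : if nt w == nf w then ca w = sc w
             else (sc w).2 = (ca w).2 + ((sc w).1 != (ca w).1).
Proof.
elim: w => [|x w IH] //.
rewrite [ca _]/= [sc _]/= !nf_cons !nt_cons.
have [S1 S2] := sc_side w.
case: eqP IH => [E|NE] IH.
  rewrite E ltnn /= IH.
  by case: x; rewrite /= ?add0n ?add1n; case: ifP => // /eqP; lia.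
case: x => /=; rewrite ?add0n ?add1n.
- case: (ltnP (nt w) (nf w)) => Hab.
  + move: (S2 Hab) IH; case: (sc w) => s c /= -> ->.
    by case: eqP => _ //=; rewrite ?eqxx ?addn0.
  + have -> : ((nt w).+1 == nf w) = false by apply/eqP; lia.
    exact: IH.
- case: (ltnP (nf w) (nt w)) => Hab.
  + move: (S1 Hab) IH; case: (sc w) => s c /= -> ->.
    by case: eqP => _ //=; rewrite ?eqxx ?addn0.
  + have -> : (nt w == (nf w).+1) = false by apply/eqP; lia.
    exact: IH.
Qed.

Lemma cs_fst P Q : (cs (zip P Q)).1 = if (P != [::]) && (Q != [::]) then nth 0 Q 0 < nth 0 P 0 else false.
Proof. by case: P => [|p P]; case: Q. Qed.

Lemma cs_sum P Q : size P = size Q ->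
  (cs (zip P Q)).2 = \sum_(j < size P)
     ((nth 0 Q j < nth 0 P j) != (if j.+1 < size P then nth 0 Q j.+1 < nth 0 P j.+1 else false)).
Proof.
elim: P Q => [|p P IH] [|q Q] //=; first by rewrite big_ord0.
move=> [HS].
rewrite big_ord_recl /= -IH // cs_fst addnC; congr (_ + _).
by case: P Q HS {IH} => [|p' P] [|q' Q].
Qed.

Set Implicit Arguments. Unset Strict Implicit. Unset Printing Implicit Defensive.

Definition r0 : 'I_2 := ord0.
Definition r1 : 'I_2 := @Ordinal 2 1 isT.

Lemma sum_I2 (F : 'I_2 -> nat) : \sum_(r < 2) F r = F r0 + F r1.
Proof. by rewrite big_ord_recl big_ord1; congr (_ + F _); apply: val_inj. Qed.

Lemma I2_cases (r : 'I_2) : r = r0 \/ r = r1.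
Proof. by case: r => [[|[|//]]] H; [left|right]; apply: val_inj. Qed.

Definition rl n (t : filling n) (r : 'I_2) : seq nat := [seq val (t (r, j)) | j <- enum 'I_n].
Definition wordt n (t : filling n) : seq bool := [seq (v \in rl t r1) | v <- iota 0 (2 * n)].

Lemma size_rl n (t : filling n) r : size (rl t r) = n.
Proof. by rewrite size_map size_enum_ord. Qed.
Lemma nth_rl n (t : filling n) r (j : 'I_n) : nth 0 (rl t r) j = t (r, j).
Proof. by rewrite (nth_map j) ?size_enum_ord // nth_ord_enum. Qed.
Lemma size_wordt n (t : filling n) : size (wordt t) = 2 * n.
Proof. by rewrite size_map size_iota. Qed.
Lemma nth_wordt n (t : filling n) v : v < 2 * n -> nth false (wordt t) v = (v \in rl t r1).
Proof. by move=> Hv; rewrite (nth_map 0) ?size_iota // nth_iota. Qed.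

Section Fill.
Variable n : nat.
Variable t : filling n.
Hypothesis Hinj : injective t.

Lemma least_r1 (r r' : 'I_2) (j : 'I_n) : r != r' -> least_r t (r, j) (r', j) = 1.
Proof.
move=> Hr; rewrite /least_r.
have Hn : 0 < n by apply: leq_ltn_trans (ltn_ord j).
have -> : iota 1 n = 1 :: iota 2 n.-1 by case: (n) Hn.
rewrite /= /stop_at /right /=.
case: (insub _) => [k|] //=.
rewrite ifT //; apply/eqP => -[] /val_inj /Hinj [] /eqP; by rewrite (negbTE Hr).
Qed.

Definition colc (j : 'I_n) : bool :=
  let s (k : 'I_n) := t (r1, k) < t (r0, k) in
  match @insub nat (fun k => k < n) 'I_n (j + 1) with
  | Some k => s j != s k
  | None => s j
  end.

Lemma inv_pair_rj (r r' : 'I_2) (j : 'I_n) :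
  inv_pair t (r, j) (r', j) =
  [&& r != r', t (r, j) < t (r', j) &
   match @insub nat (fun k => k < n) 'I_n (j + 1) with
   | Some k => t (r', k) < t (r, k)
   | None => r' < r
   end].
Proof.
rewrite /inv_pair /=.
case: (eqVneq r r') => [<-|Hr]; first by rewrite eqxx.
rewrite least_r1 // eqxx /= /entry !ltnS /right /=.
have -> : ((r, j) != (r', j)) by apply: contra_neq Hr => -[].
by case: (insub _) => [k|] //=; rewrite ltnS.
Qed.

Lemma inv_pair_neq (c c' : box n) : c.2 != c'.2 -> inv_pair t c c' = false.
Proof. by move=> H; rewrite /inv_pair (negbTE H) andbF. Qed.

Lemma sum_box (G : box n -> nat) : \sum_(c : box n) G c = \sum_(r < 2) \sum_(j < n) G (r, j).
Proof. by rewrite (pair_big xpredT xpredT (fun r j => G (r, j))) /=; apply: eq_bigr => -[]. Qed.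

Lemma inv_sum : inv t = \sum_(j < n) colc j.
Proof.
rewrite /inv -sum1dep_card big_mkcond /=.
rewrite -(pair_big xpredT xpredT (fun c c' => if inv_pair t c c' then 1 else 0)) /=.
rewrite sum_box exchange_big /=; apply: eq_bigr => j _.
have E : forall r, \sum_(c' : box n) (if inv_pair t (r, j) c' then 1 else 0) =
                    \sum_(r' < 2) (if inv_pair t (r, j) (r', j) then 1 else 0).
  move=> r; rewrite sum_box; apply: eq_bigr => r' _.
  rewrite (bigD1 j) //= big1 ?addn0 // => j' Hj'.
  by rewrite inv_pair_neq //= eq_sym.
rewrite (eq_bigr _ (fun r _ => E r)) sum_I2 !sum_I2 !inv_pair_rj /=.
have D : forall x : 'I_n, (t (r0, x) < t (r1, x)) = ~~ (t (r1, x) < t (r0, x)).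
  move=> x; rewrite -leqNgt [RHS]leq_eqVlt.
  have -> : (t (r0, x) == t (r1, x) :> nat) = false by apply/eqP => /val_inj /Hinj.
  by [].
rewrite /colc D; case: (insub _) => [k|] /=; rewrite ?D.
  by case: (t (r1, j) < t (r0, j)); case: (t (r1, k) < t (r0, k)).
by case: (t (r1, j) < t (r0, j)).
Qed.

Lemma inv_cs : inv t = (cs (zip (rl t r0) (rl t r1))).2.
Proof.
rewrite cs_sum ?size_rl // inv_sum; apply: eq_bigr => j _.
rewrite !nth_rl /colc.
case: insubP => [k Hk Ek|Hk].
  have -> : j.+1 = val k by rewrite Ek addn1.
  by rewrite ltn_ord !nth_rl.
have -> : (j.+1 < n) = false by rewrite -addn1; apply/negbTE.
by case: (_ < _).
Qed.

Hypothesis Hrow : forall r (j j' : 'I_n), j < j' -> t (r, j) < t (r, j').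

Lemma sorted_rl r : sorted ltn (rl t r).
Proof.
apply/(sortedP 0) => i; rewrite size_rl => Hi.
have Hi' : i < n by apply: ltnW.
rewrite -[i]/(nat_of_ord (Ordinal Hi')) nth_rl -[(Ordinal Hi' : nat).+1]/(nat_of_ord (Ordinal Hi)) nth_rl.
by apply: Hrow.
Qed.

Lemma cover v : v < 2 * n -> exists c, val (t c) = v.
Proof.
move=> Hv.
have Hc : #|'I_(2 * n)| <= #|{: box n}| by rewrite card_prod !card_ord.
have /codomP [c Ec] := inj_card_onto Hinj Hc (Ordinal Hv).
by exists c; rewrite -Ec.
Qed.

Lemma mem_rl r v : (v \in rl t r) = [exists j, val (t (r, j)) == v].
Proof.
apply/mapP/existsP => [[j _ ->]|[j /eqP <-]]; first by exists j.
by exists j; rewrite ?mem_enum.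
Qed.

Lemma pos_true : pos true (wordt t) = rl t r1.
Proof.
apply: (irr_sorted_eq ltn_trans ltnn (sorted_pos _ _) (sorted_rl _)) => v.
rewrite mem_pos size_wordt.
case: (ltnP v (2 * n)) => Hv; first by rewrite nth_wordt // eqb_id.
apply/esym/negbTE; rewrite mem_rl; apply/existsP => -[j /eqP Ej].
by move: (ltn_ord (t (r1, j))); rewrite Ej ltnNge Hv.
Qed.

Lemma pos_false : pos false (wordt t) = rl t r0.
Proof.
apply: (irr_sorted_eq ltn_trans ltnn (sorted_pos _ _) (sorted_rl _)) => v.
rewrite mem_pos size_wordt.
case: (ltnP v (2 * n)) => Hv; last first.
  apply/esym/negbTE; rewrite mem_rl; apply/existsP => -[j /eqP Ej].
  by move: (ltn_ord (t (r0, j))); rewrite Ej ltnNge Hv.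
rewrite nth_wordt // eqbF_neg /= !mem_rl.
have [[r j] Ec] := cover Hv.
have Hex : forall r', [exists j', val (t (r', j')) == v] = (r' == r).
  move=> r'; apply/existsP/eqP => [[j' /eqP]|->]; last by exists j; rewrite Ec.
  by rewrite -Ec => /val_inj /Hinj [].
by rewrite !Hex; case: (I2_cases r) => ->.
Qed.

Lemma inv_sc : inv t = (sc (wordt t)).2.
Proof.
have Hnf : nf (wordt t) = n by rewrite -size_pos_f pos_false size_rl.
have Hnt : nt (wordt t) = n by rewrite -size_pos_t pos_true size_rl.
rewrite inv_cs -pos_false -pos_true.
have := B2 (wordt t); rewrite Hnf Hnt minnn subnn !drop0 => ->.
by have := B3 (wordt t); rewrite Hnf Hnt eqxx => ->.
Qed.

Lemma wordt_Wd : wordt t \in Wd n n.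
Proof. by rewrite mem_Wd -size_pos_f -size_pos_t pos_false pos_true !size_rl !eqxx. Qed.

End Fill.


Lemma size_nfnt w : size w = nf w + nt w.
Proof. elim: w => [|x w IH] //; rewrite nf_cons nt_cons /= IH; case: x => /=; lia. Qed.

Section Mk.
Variable n : nat.
Variable w : seq bool.
Hypothesis Hf : nf w = n.
Hypothesis Ht : nt w = n.

Lemma size_w : size w = 2 * n. Proof. by rewrite size_nfnt Hf Ht; lia. Qed.
Lemma size_posb b : size (pos b w) = n.
Proof. by case: b; rewrite ?size_pos_t ?size_pos_f. Qed.

Definition dflt (c : box n) : 'I_(2 * n) := widen_ord (leq_pmull n (isT : 0 < 2)) c.2.
Definition mk : filling n := [ffun c => insubd (dflt c) (nth 0 (pos (c.1 == r1) w) c.2)].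

Lemma nth_pos_lt b (j : 'I_n) : nth 0 (pos b w) j < 2 * n.
Proof.
have Hj : j < size (pos b w) by rewrite size_posb.
by have := mem_nth 0 Hj; rewrite mem_pos size_w => /andP[].
Qed.

Lemma val_mk c : val (mk c) = nth 0 (pos (c.1 == r1) w) c.2.
Proof. by rewrite ffunE val_insubd nth_pos_lt. Qed.

Lemma rl_mk r : rl mk r = pos (r == r1) w.
Proof.
apply: (@eq_from_nth _ 0); first by rewrite size_rl size_posb.
move=> i; rewrite size_rl => Hi.
by rewrite -[i]/(nat_of_ord (Ordinal Hi)) nth_rl val_mk.
Qed.

Lemma mk_rowstd : row_standard mk.
Proof.
apply/andP; split.
  apply/injectiveP => c c' /(congr1 val); rewrite !val_mk.
  case: c c' => [r j] [r' j'] /=.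
  have Hu : forall b, uniq (pos b w) by move=> b; apply: (sorted_uniq ltn_trans ltnn (sorted_pos _ _)).
  case: (eqVneq (r == r1) (r' == r1)) => Hb.
    rewrite Hb => /eqP; rewrite nth_uniq ?size_posb // => /eqP Ej.
    have -> : j = j' by apply: val_inj.
    by case: (I2_cases r) Hb => ->; case: (I2_cases r') => -> //.
  move=> E; exfalso.
  have Hj : j < size (pos (r == r1) w) by rewrite size_posb.
  have Hj' : j' < size (pos (r' == r1) w) by rewrite size_posb.
  have := mem_nth 0 Hj; have := mem_nth 0 Hj'; rewrite E !mem_pos => /andP[_ /eqP ->] /andP[_ /eqP].
  by apply/eqP; rewrite eq_sym.
apply/forallP => -[r j]; apply/forallP => -[r' j'] /=; apply/implyP => /andP[/eqP <- Hjj].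
rewrite /entry ltnS !val_mk /=.
apply: (sorted_ltn_nth ltn_trans 0 (sorted_pos _ _)) => //; by rewrite inE size_posb.
Qed.

Lemma wordt_mk : wordt mk = w.
Proof.
rewrite /wordt rl_mk eqxx -size_w -[RHS](mkseq_nth false) /mkseq.
by apply/eq_in_map => v; rewrite mem_iota add0n /= mem_pos => ->; rewrite eqb_id.
Qed.
End Mk.


Lemma rowstd_inj n (t : filling n) : row_standard t -> injective t.
Proof. by case/andP => /injectiveP. Qed.

Lemma rowstd_row n (t : filling n) : row_standard t ->
  forall r (j j' : 'I_n), j < j' -> t (r, j) < t (r, j').
Proof.
case/andP => _ /forallP H r j j' Hj.
have := H (r, j) => /forallP /(_ (r, j')) /implyP.
by rewrite /entry ltnS eqxx Hj; apply.
Qed.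

Lemma wordt_inj n : {in [pred t : filling n | row_standard t] &, injective (@wordt n)}.
Proof.
move=> t t' Ht Ht' E.
have R1 : rl t r1 = rl t' r1.
  by rewrite -(pos_true (rowstd_row Ht)) E (pos_true (rowstd_row Ht')).
have R0 : rl t r0 = rl t' r0.
  by rewrite -(pos_false (rowstd_inj Ht) (rowstd_row Ht)) E (pos_false (rowstd_inj Ht') (rowstd_row Ht')).
apply/ffunP => -[r j]; apply: val_inj.
by rewrite /= -(nth_rl t r j) -(nth_rl t' r j); case: (I2_cases r) => ->; rewrite ?R0 ?R1.
Qed.

Lemma image_perm n : perm_eq (image (@wordt n) [pred t : filling n | row_standard t]) (Wd n n).
Proof.
apply: uniq_perm.
- rewrite map_inj_in_uniq ?enum_uniq // => t t'; rewrite !mem_enum; exact: wordt_inj.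
- exact: uniq_Wd.
move=> w; apply/imageP/idP => [[t Ht ->]|].
  exact: wordt_Wd (rowstd_inj Ht) (rowstd_row Ht).
rewrite mem_Wd => /andP[/eqP Hf /eqP Ht].
exists (mk n w); first exact: mk_rowstd.
by rewrite wordt_mk.
Qed.

Local Open Scope ring_scope.

Lemma sum_rowstd n : \sum_(t : filling n | row_standard t) 'X^(inv t) =
                     \sum_(w <- Wd n n) 'X^((sc w).2) :> {poly rat}.
Proof.
rewrite (eq_bigr (fun t => 'X^((sc (wordt t)).2))); last first.
  by move=> t Ht; rewrite (inv_sc (rowstd_inj Ht) (rowstd_row Ht)).
rewrite -(perm_big _ (image_perm n)) big_image.
by apply: eq_bigl => t; rewrite inE.
Qed.

Lemma inv_lt n (t : filling n) : (inv t < ((2 * n) ^ 2).+1)%N.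
Proof.
rewrite ltnS /inv; apply: leq_trans (max_card _) _.
by rewrite card_prod !card_prod !card_ord mulnn.
Qed.

Lemma xi_eq n : \sum_(k < ((2 * n) ^ 2).+1) (#|S n k|)%:R *: 'X^k =
  \sum_(t : filling n | row_standard t) 'X^(inv t) :> {poly rat}.
Proof.
have E : forall k : 'I_(((2 * n) ^ 2).+1), (#|S n k|)%:R *: 'X^k =
   \sum_(t : filling n) (if row_standard t && (inv t == k) then 'X^(inv t) else 0) :> {poly rat}.
  move=> k; rewrite scaler_nat -sumr_const -big_mkcond /=.
  apply: eq_big => t; first by rewrite inE.
  by rewrite inE => /andP[_ /eqP ->].
rewrite (eq_bigr _ (fun k _ => E k)) exchange_big /= [RHS]big_mkcond /=.
apply: eq_bigr => t _.
case: (row_standard t) => /=; last by rewrite big1.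
rewrite (bigD1 (Ordinal (inv_lt t))) //= eqxx big1 ?addr0 // => k Hk.
by rewrite ifF //; apply/negbTE; apply: contra Hk => /eqP Ek; apply/eqP/val_inj.
Qed.

Lemma ballot_alt n i : (1 <= i <= n)%N ->
  ballot n.-1 (n - i) = (i%:R / n%:R) * ('C(2 * n - i - 1, n - i))%:R.
Proof.
case: n => [|m] /andP[Hi Hin]; first by case: i Hi Hin.
rewrite ballotE /=.
have -> : (m%:R - (m.+1 - i)%:R + 1 : rat) = i%:R.
  by rewrite natrB // -natr1; ring.
have -> : (2 * m.+1 - i - 1 = m + (m.+1 - i))%N by lia.
by rewrite -[in RHS](bin_sub (leq_addl m _)) addnK.
Qed.


Theorem mainTheorem11 (n : nat) (hn : (1 <= n)%N) :
  let xi : {poly rat} := \sum_(k < ((2 * n) ^ 2).+1) (#|S n k|)%:R *: 'X^k in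
  xi = \sum_(1 <= i < n.+1) ballot n.-1 (n - i) *: (1 + 'X) ^+ i /\
  xi = \sum_(1 <= i < n.+1)
         ((i%:R / n%:R) * ('C(2 * n - i - 1, n - i))%:R) *: (1 + 'X) ^+ i.
Proof.
move=> xi.
have H1 : xi = \sum_(1 <= i < n.+1) ballot n.-1 (n - i) *: (1 + 'X) ^+ i.
  rewrite /xi xi_eq sum_rowstd Tot_bal big_ord_recr /= bal_gt ?mulr0n ?addr0; last by rewrite ltn_predL.
  rewrite big_rev_mkord subn1 /=.
  apply: eq_bigr => i _.
  have Hi : (i < n)%N := ltn_ord i.
  rewrite subSS.
  rewrite subKn ?(ltnW Hi) // -bal_ballot ?scaler_nat //.
  by rewrite prednK // ltnW.
split=> //; rewrite H1.
apply: eq_big_nat => i /andP[Hi Hin].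
by rewrite ballot_alt // Hi -ltnS.
Qed.
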